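(* Let $t$ be a normal $\lambda$-term, $v$ a closed $\lambda$-term, $\alpha,x$ variables, and $x_1,\dots,x_n$ ($n\ge0$) variables distinct from $\alpha$. If $t[\lambda x_1\dots\lambda x_n\alpha/x]\rightarrow_\beta v$, then $x\notin Fv(t)$.
   Context: $\lambda$-terms are those of the untyped $\lambda$-calculus; $Fv(t)$ is the set of free variables of $t$; a term is closed if it has no free variable; $t[u/x]$ is capture-avoiding substitution; $\rightarrow_\beta$ denotes $\beta$-reduction in zero or more steps; a term is normal if it contains no $\beta$-redex. *)

(* Defs.v *)
(* Untyped lambda-calculus in de Bruijn representation
   (terms up to alpha-equivalence; free variables = free indices). *)
From Stdlib Require Import Arith Relations.

Inductive term : Type :=
| Var : nat -> term
| App : term -> term -> term
| Lam : term -> term.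

Fixpoint lift (k c : nat) (t : term) : term :=
  match t with
  | Var y => if Nat.ltb y c then Var y else Var (y + k)
  | App t1 t2 => App (lift k c t1) (lift k c t2)
  | Lam t1 => Lam (lift k (S c) t1)
  end.

(* beta-substitution: t{u/k}, replaces index k by u (lifted by k) and
   decrements the free indices above k (the binder disappears) *)
Fixpoint bsubst (t : term) (k : nat) (u : term) : term :=
  match t with
  | Var y =>
      if Nat.eqb y k then lift k 0 u
      else if Nat.ltb y k then Var y else Var (pred y)
  | App t1 t2 => App (bsubst t1 k u) (bsubst t2 k u)
  | Lam t1 => Lam (bsubst t1 (S k) u)
  end.

Fixpoint subst (t : term) (x : nat) (u : term) : term :=
  match t with
  | Var y => if Nat.eqb y x then u else Var y
  | App t1 t2 => App (subst t1 x u) (subst t2 x u)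
  | Lam t1 => Lam (subst t1 (S x) (lift 1 0 u))
  end.

Fixpoint free_in (x : nat) (t : term) : Prop :=
  match t with
  | Var y => y = x
  | App t1 t2 => free_in x t1 \/ free_in x t2
  | Lam t1 => free_in (S x) t1
  end.

Definition closed (t : term) : Prop := forall x, ~ free_in x t.

Inductive beta : term -> term -> Prop :=
| beta_redex : forall t u, beta (App (Lam t) u) (bsubst t 0 u)
| beta_appl : forall t t' u, beta t t' -> beta (App t u) (App t' u)
| beta_appr : forall t u u', beta u u' -> beta (App t u) (App t u')
| beta_lam : forall t t', beta t t' -> beta (Lam t) (Lam t').

Definition beta_star : term -> term -> Prop := clos_refl_trans term beta.

Fixpoint normal (t : term) : Prop :=
  match t with
  | Var _ => True
  | App (Lam _) _ => False
  | App t1 t2 => normal t1 /\ normal t2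
  | Lam t1 => normal t1
  end.

Fixpoint lams (n : nat) (b : term) : term :=
  match n with
  | 0 => b
  | S m => Lam (lams m b)
  end.

(* \x_1...\x_n. alpha, with alpha a free variable distinct from the x_i:
   under n binders the free variable alpha has index n + alpha *)
Definition proj_term (n alpha : nat) : term := lams n (Var (n + alpha)).

(* Main.v *)
Require Import Defs.
From Stdlib Require Import Arith Lia Relations Classical.

Definition pshape (k : nat) (s : term) : Prop :=
  exists m, s = lams (S m) (Var (k + S m)).

Fixpoint W (k : nat) (s : term) : Prop :=
  match s with
  | Var _ => True
  | Lam b => W (S k) b
  | App a u => W k a /\ W k u /\
      (match a with Lam _ => pshape k a | _ => True end)
  end.

Fixpoint H (s : term) : Prop :=
  match s with
  | Var _ => True
  | App a _ => H a
  | Lam _ => False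
  end.

Inductive R : nat -> term -> Prop :=
| R_var : forall k, R k (Var k)
| R_lam : forall k s, R (S k) s -> R k (Lam s)
| R_appl : forall k s u, R k s -> R k (App s u)
| R_appr : forall k s u, H s -> R k u -> R k (App s u).

Lemma W_lams : forall m k j, W k (lams m (Var j)).
Proof. induction m; simpl; auto. Qed.

Lemma R_lams : forall m k, R k (lams m (Var (m + k))).
Proof.
  induction m; intros k; simpl. constructor.
  constructor. replace (S (m + k)) with (m + S k) by lia. apply IHm.
Qed.

Lemma bsubst_lams : forall m j c u, j <= c ->
  bsubst (lams m (Var (S c + m))) j u = lams m (Var (c + m)).
Proof.
  induction m; intros j c u Hj.
  - replace (S c + 0) with (S c) by lia. replace (c + 0) with c by lia.
    cbn [lams bsubst].
    rewrite (proj2 (Nat.eqb_neq (S c) j)) by lia.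
    rewrite (proj2 (Nat.ltb_ge (S c) j)) by lia. reflexivity.
  - simpl. f_equal.
    replace (S (c + S m)) with (S (S c) + m) by lia.
    replace (c + S m) with (S c + m) by lia.
    apply IHm. lia.
Qed.

Lemma lift_lams : forall n c k, c <= k ->
  lift 1 c (lams n (Var (n + k))) = lams n (Var (n + S k)).
Proof.
  induction n; intros c k Hc; simpl.
  - destruct (Nat.ltb_spec k c); [lia|]. f_equal. lia.
  - f_equal. replace (S (n + k)) with (n + S k) by lia.
    rewrite IHn by lia. f_equal. f_equal. lia.
Qed.

Lemma H_beta : forall s s', beta s s' -> H s -> H s'.
Proof.
  induction 1; simpl; auto. intros [].
Qed.

Lemma to_lam : forall s s', beta s s' -> forall k, W k s ->
  (match s with Lam _ => False | _ => True end) ->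
  (match s' with Lam _ => pshape k s' | _ => True end).
Proof.
  induction 1; intros k Hw Hs; simpl in *; auto.
  destruct Hw as [_ [_ [m Hm]]]. injection Hm as Hm. subst t.
  replace (k + S m) with (S k + m) by lia.
  rewrite bsubst_lams by lia.
  destruct m; simpl; auto. exists m. reflexivity.
  contradiction.
Qed.

Lemma lams_nf : forall m j s, beta (lams m (Var j)) s -> False.
Proof.
  induction m; intros j s Hb; simpl in Hb; inversion Hb; subst; eauto.
Qed.

Lemma W_beta : forall s s', beta s s' -> forall k, W k s -> W k s'.
Proof.
  induction 1; intros k Hw; simpl in *.
  - destruct Hw as [_ [_ [m Hm]]]. injection Hm as Hm. subst t.
    replace (k + S m) with (S k + m) by lia.
    rewrite bsubst_lams by lia. apply W_lams.
  - destruct Hw as [H1 [H2 H3]]. split; [auto|split; [auto|]].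
    destruct t as [|t1 t2|t1] eqn:Et.
    + inversion H0.
    + apply (to_lam _ _ H0 k H1). exact I.
    + exfalso. destruct H3 as [m Hm]. rewrite Hm in H0. eapply lams_nf; eauto.
  - destruct Hw as [H1 [H2 H3]]. auto.
  - auto.
Qed.

Lemma R_beta : forall s s', beta s s' -> forall k, W k s -> R k s -> R k s'.
Proof.
  induction 1; intros k Hw Hr; simpl in Hw.
  - destruct Hw as [_ [_ [m Hm]]]. injection Hm as Hm. subst t.
    replace (k + S m) with (S k + m) by lia.
    rewrite bsubst_lams by lia. replace (k + m) with (m + k) by lia.
    apply R_lams.
  - destruct Hw as [H1 [H2 _]]. inversion Hr; subst.
    + apply R_appl; eauto.
    + apply R_appr; eauto using H_beta.
  - destruct Hw as [H1 [H2 _]]. inversion Hr; subst.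
    + apply R_appl; eauto.
    + apply R_appr; eauto.
  - inversion Hr; subst. constructor; eauto.
Qed.

Lemma R_free : forall k s, R k s -> free_in k s.
Proof. induction 1; simpl; auto. Qed.

Lemma lift_proj : forall n k, lift 1 0 (proj_term n k) = proj_term n (S k).
Proof. intros. unfold proj_term. apply lift_lams. lia. Qed.

Lemma W_subst : forall t x n k, normal t -> W k (subst t x (proj_term n k)).
Proof.
  induction t as [y|t1 IHt1 t2 IHt2|t IHt]; intros x n k Hn; simpl in *.
  - destruct (Nat.eqb y x); simpl; auto. unfold proj_term. apply W_lams.
  - destruct t1 as [y|a b|a]; try contradiction.
    + destruct Hn as [_ H2]. simpl. destruct (Nat.eqb_spec y x).
      * split; [unfold proj_term; apply W_lams|split; [auto|]].
        unfold proj_term. destruct n; simpl; auto.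
        exists n. simpl. do 3 f_equal. lia.
      * simpl. auto.
    + destruct Hn as [H1 H2]. simpl. split; [|split; auto].
      apply (IHt1 x n k H1).
  - rewrite lift_proj. auto.
Qed.

Lemma H_subst : forall t x u, normal t -> H t -> ~ free_in x t -> H (subst t x u).
Proof.
  induction t; intros x u Hn Hh Hf; simpl in *.
  - destruct (Nat.eqb_spec n x); [contradiction|]. simpl; auto.
  - destruct t1; try contradiction; simpl in *.
    + destruct (Nat.eqb_spec n x); [tauto|]. simpl; auto.
    + destruct Hn as [H1 _]. apply (IHt1 x u H1 Hh). tauto.
  - contradiction.
Qed.

Lemma normal_app_H : forall a b, normal (App a b) -> H a.
Proof.
  induction a as [y|a1 IHa1 a2 IHa2|a]; intros b Hn.
  - exact I.
  - simpl. apply (IHa1 a2). destruct Hn as [H1 _]. exact H1.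
  - destruct Hn.
Qed.

Lemma normal_app : forall a b, normal (App a b) -> normal a /\ normal b.
Proof. intros a b Hn. destruct a; simpl in *; tauto. Qed.

Lemma R_subst : forall t x n k, normal t -> free_in x t ->
  R k (subst t x (proj_term n k)).
Proof.
  induction t; intros x n' k Hn Hf; simpl in *.
  - subst. rewrite Nat.eqb_refl. unfold proj_term.
    apply R_lams.
  - destruct (normal_app _ _ Hn) as [H1 H2].
    destruct (classic (free_in x t1)).
    + apply R_appl. auto.
    + apply R_appr.
      * apply H_subst; auto. eapply normal_app_H; eauto.
      * destruct Hf; [contradiction|]. auto.
  - constructor. rewrite lift_proj. auto.
Qed.

Theorem corollary2p1p3 (t v : term) (alpha x n : nat) :
  normal t -> closed v ->
  beta_star (subst t x (proj_term n alpha)) v ->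
  ~ free_in x t.
Proof.
  intros Hn Hc Hb Hf.
  assert (Hinv : forall a b, beta_star a b -> W alpha a /\ R alpha a ->
                 W alpha b /\ R alpha b).
  { intros a b Hab. induction Hab; intros [Hw Hr]; auto.
    split; [eapply W_beta|eapply R_beta]; eauto. }
  destruct (Hinv _ _ Hb) as [_ Hr].
  - split; [apply W_subst|apply R_subst]; auto.
  - apply (Hc alpha). apply R_free. exact Hr.
Qed.
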